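(* For positive integers $b,n$ and nonnegative integers $c$ and $k\le n$, $$\Psi_n(k,1,b,c)=\Psi_{n-1}(k,c+1,b,c).$$
   Context: All constant terms are taken with $\operatorname{CT}_x=\operatorname{CT}_{x_n}\cdots\operatorname{CT}_{x_1}$ (iterated constant-term extraction), where $(1-x_i)^{-b}$ and $x_i/(1-x_i)$ are expanded as power series in $x_i$, and for $i<j$, $(x_j-x_i)^{-c}=x_j^{-c}(1-x_i/x_j)^{-c}$ is expanded as a power series in $x_i/x_j$. $$\Psi_n(k,a,b,c):=\operatorname{CT}_x[t^k]\prod_{i=1}^n(1-x_i)^{-b}x_i^{-a+1}\Big(1+t\frac{x_i}{1-x_i}\Big)\prod_{1\le i<j\le n}(x_j-x_i)^{-c},$$ with $[t^k]$ denoting the coefficient of $t^k$; for $n=0$ the empty product is $1$, so $\Psi_0(k,a,b,c)$ is $1$ if $k=0$ and $0$ otherwise. *)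

(* Defs.v *)
From mathcomp Require Import all_boot.
Set Implicit Arguments. Unset Strict Implicit. Unset Printing Implicit Defensive.

(* Iterated constant term
     Psi_n(k,a,b,c) = CT_{x_n} ... CT_{x_1} [t^k]
        prod_i (1-x_i)^{-b} x_i^{-a+1} (1 + t x_i/(1-x_i)) prod_{i<j} (x_j-x_i)^{-c}
   computed literally, one variable at a time (x_1 first).

   Expansions used:
     (x_j - x_i)^{-c} = x_j^{-c} sum_{m>=0} 'C(c+m-1,m) (x_i/x_j)^m,
     (1-x)^{-e}       = sum_{q>=0} 'C(e+q-1,q) x^q   (correct also for e = 0),
     [t^k] prod_i (1 + t x_i/(1-x_i)) : each variable contributes the factor
        1 (s_i = 0) or x_i (1-x_i)^{-1} (s_i = 1), with sum_i s_i = k.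

   When CT_{x_i} is taken (variables x_1..x_{i-1} already eliminated), the
   current expression is a finite sum of terms
       coeff * prod_{j>=i} x_j^{-C_j} * (factors of the variables x_i..x_n),
   where C_j collects the exponents m_{lj} (l < i) coming from the
   expansions of (x_j - x_l)^{-c} already used.  The x_i-dependent part is
       x_i^{-a+1-c(i-1)-C_i} x_i^{s} (1-x_i)^{-b-s} prod_{j>i} (1-x_i/x_j)^{-c} x_j^{-c}
   whose constant term in x_i is the sum over s, and over the exponents
   (m_{ij})_{j>i} with R := sum_j m_{ij} <= a - 1 + c(i-1) + C_i - s, of
       'C(b+s+q-1, q) * prod_j 'C(c+m_{ij}-1, m_{ij}),  q := a-1+c(i-1)+C_i-s-R,
   with the x_j^{-m_{ij}} added to C_j.  All coefficients are natural numbers. *)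

Fixpoint sum_tuples (L B : nat) (f : seq nat -> nat) : nat :=
  match L with
  | 0 => f [::]
  | L'.+1 => \sum_(0 <= m < B.+1) sum_tuples L' (B - m) (fun t => f (m :: t))
  end.

(* ct n b c a k i0 C : iterated constant term over the n remaining variables
   x_{i0+1}, ..., x_{i0+n}; C = their accumulated column exponents (size n);
   k = remaining required power of t. *)
Fixpoint ct (n : nat) (b c a k i0 : nat) (C : seq nat) : nat :=
  match n with
  | 0 => (k == 0)
  | n'.+1 =>
      let Ci := head 0 C in
      let rest := behead C in
      \sum_(0 <= s < 2)
        if (s <= k) && (s + 1 <= a + c * i0 + Ci) then
          let B := a + c * i0 + Ci - 1 - s in
          sum_tuples n' B (fun m =>
            'C(b + s + (B - sumn m) - 1, B - sumn m)
            * \prod_(mj <- m) 'C(c + mj - 1, mj)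
            * ct n' b c a (k - s) i0.+1 [seq x.1 + x.2 | x <- zip rest m])
        else 0
  end.

Definition Psi (n k a b c : nat) : nat := ct n b c a k 0 (nseq n 0).

(* Main.v *)
Require Import Defs.
From mathcomp Require Import all_boot.
From mathcomp Require Import zify.

Lemma sum_tuples_ext L B f g :
  (forall t, f t = g t) -> sum_tuples L B f = sum_tuples L B g.
Proof.
elim: L B f g => [|L IH] B f g H /=; first exact: H.
apply: eq_bigr => m _; apply: IH => t; exact: H.
Qed.

Lemma sum_tuples0 L f : sum_tuples L 0 f = f (nseq L 0).
Proof.
elim: L f => [|L IH] f //=.
by rewrite big_nat1 sub0n IH.
Qed.

Lemma ct_shift n b c a a' k i0 i0' C :
  a + c * i0 = a' + c * i0' -> ct n b c a k i0 C = ct n b c a' k i0' C.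
Proof.
elim: n a a' k i0 i0' C => [//|n IH] a a' k i0 i0' C H /=.
rewrite H; apply: eq_bigr => s _; case: ifP => // _.
apply: sum_tuples_ext => t; rewrite (IH a a' _ i0.+1 i0'.+1) //.
rewrite !mulnS; lia.
Qed.

Lemma zip_nseq0 L : [seq x.1 + x.2 | x <- zip (nseq L 0) (nseq L 0)] = nseq L 0.
Proof. by elim: L => //= L ->. Qed.

Lemma prod_nseq0 c L : \prod_(mj <- nseq L 0) 'C(c + mj - 1, mj) = 1.
Proof. by elim: L => [|L IH]; rewrite ?big_nil //= big_cons bin0 IH. Qed.

Theorem lemma5p7 (b n c k : nat) :
  0 < b -> 0 < n -> k <= n ->
  Psi n k 1 b c = Psi n.-1 k c.+1 b c.
Proof.
move=> _; case: n => [//|n] _ _ /=.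
rewrite /Psi /= big_nat_recr //= big_nat1 /=.
rewrite muln0 !addn0 subnn andbF addn0 sub0n sum_tuples0.
rewrite (_ : sumn (nseq n 0) = 0); last by elim: n.
rewrite zip_nseq0 prod_nseq0 bin0 !mul1n subn0.
apply: ct_shift; rewrite muln1 muln0; lia.
Qed.
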